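(* Let $n$ and $k$ be positive integers with $k\ge2$ and $n\ge2k+1$. Then $B_2(n,k,k+1;3)\ge 2^{n-2k+1}$.
   Context: For a prime power $q$, $\mathcal{G}_q(n,k)$ denotes the set of all $k$-dimensional subspaces of $\mathbb{F}_q^n$. An $\alpha$-$(n,k,\delta)_q^c$ covering Grassmannian code is a subset $\mathcal{C}\subseteq\mathcal{G}_q(n,k)$ (no repeated codewords) such that every set of $\alpha$ distinct codewords of $\mathcal{C}$ spans a subspace of $\mathbb{F}_q^n$ of dimension at least $k+\delta$. $B_q(n,k,\delta;\alpha)$ denotes the maximum size of an $\alpha$-$(n,k,\delta)_q^c$ code. *)

(* Defs.v *)
From HB Require Import structures.
From mathcomp Require Import all_boot all_algebra.
Set Implicit Arguments. Unset Strict Implicit. Unset Printing Implicit Defensive.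
Import GRing.Theory.

(* A code is a duplicate-free list of subspaces (i.e. a finite set of
   subspaces).  alpha-(n,k,delta)^c covering Grassmannian code: every
   codeword has dimension k, and any alpha distinct codewords span a
   subspace of dimension >= k + delta. *)
Definition covering_code (F : fieldType) (n k delta alpha : nat)
    (C : seq {vspace 'rV[F]_n}) : Prop :=
  [/\ uniq C,
      (forall U, U \in C -> \dim U = k) &
      (forall s : seq {vspace 'rV[F]_n}, uniq s -> size s = alpha ->
          {subset s <= C} -> k + delta <= \dim (\sum_(U <- s) U)%VS)].

(* "B_q(n,k,delta;alpha) >= m": since B_q is the maximum size of such a
   code (over a finite field there are finitely many codes), this holds
   iff some code of size at least m exists. *)
Definition B_ge (F : fieldType) (n k delta alpha m : nat) : Prop :=
  exists C : seq {vspace 'rV[F]_n}, @covering_code F n k delta alpha C /\ m <= size C.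

(* Main.v *)
Require Import Defs.
From mathcomp Require Import all_boot all_algebra zify ring.
Set Implicit Arguments. Unset Strict Implicit. Unset Printing Implicit Defensive.
Import GRing.Theory.
Local Open Scope ring_scope.

Local Notation F := 'F_2.

Definition emb (n k : nat) (p q : {poly F}) : 'rV[F]_n :=
  \row_(j < n) (if (j < k)%N then p`_j else q`_(j - k)).

Lemma embD n k (p q p' q' : {poly F}) : emb n k p q + emb n k p' q' = emb n k (p + p') (q + q').
Proof. apply/rowP => j; rewrite !mxE !coefD; by case: ifP. Qed.

Lemma emb00 n k : emb n k 0 0 = 0.
Proof. apply/rowP => j; rewrite !mxE !coef0; by case: ifP. Qed.

Lemma emb_inj n k (p q p' q' : {poly F}) : (k <= n)%N ->
  (size p <= k)%N -> (size p' <= k)%N -> (size q <= n - k)%N -> (size q' <= n - k)%N ->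
  emb n k p q = emb n k p' q' -> p = p' /\ q = q'.
Proof.
move=> kn sp sp' sq sq' /rowP E; split; apply/polyP => i.
- case: (ltnP i k) => ik.
    have il : (i < n)%N by apply: leq_trans ik kn.
    by move: (E (Ordinal il)); rewrite !mxE /= ik.
  by rewrite (leq_sizeP _ _ sp) // (leq_sizeP _ _ sp').
- case: (ltnP i (n - k)) => ik.
    have il : (i + k < n)%N by rewrite addnC -ltn_subRL.
    move: (E (Ordinal il)); rewrite !mxE /=.
    have -> : (i + k < k)%N = false by rewrite ltnNge leq_addl.
    by rewrite addnK.
  by rewrite (leq_sizeP _ _ sq) // (leq_sizeP _ _ sq').
Qed.

Definition pol (k : nat) (y : 'rV[F]_k) : {poly F} := \sum_(i < k) y 0 i *: 'X^i.

Lemma size_pol k y : (size (@pol k y) <= k)%N.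
Proof.
apply/leq_sizeP => j kj; rewrite coef_sum big1 // => i _.
have: (i < j)%N by apply: leq_trans (ltn_ord i) kj.
by rewrite coefZ coefXn ltn_neqAle eq_sym => /andP[/negbTE ->]; rewrite mulr0.
Qed.

Lemma pol_row k (u : {poly F}) : (size u <= k)%N -> pol (\row_(i < k) u`_i) = u.
Proof.
move=> su; apply/polyP => j; rewrite coef_sum.
case: (ltnP j k) => jk.
  rewrite (bigD1 (Ordinal jk)) //= big1 => [|i ij].
    by rewrite mxE coefZ coefXn eqxx mulr1 addr0.
  by rewrite coefZ coefXn mxE; case: eqP => [E|]; [case/eqP: ij; apply/val_inj|]; rewrite ?mulr0.
rewrite (leq_sizeP _ _ su) // big1 // => i _.
have: (i < j)%N by apply: leq_trans (ltn_ord i) jk.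
by rewrite coefZ coefXn ltn_neqAle eq_sym => /andP[/negbTE ->]; rewrite mulr0.
Qed.

Lemma coef_pol k (y : 'rV[F]_k) (i : 'I_k) : (pol y)`_i = y 0 i.
Proof.
rewrite coef_sum (bigD1 i) //= big1 => [|j ji].
  by rewrite coefZ coefXn eqxx mulr1 addr0.
by rewrite coefZ coefXn; case: eqP => [E|]; [case/eqP: ji; apply/val_inj|]; rewrite ?mulr0.
Qed.

Lemma pol_inj k : injective (@pol k).
Proof. by move=> y y' E; apply/rowP => i; rewrite -!coef_pol E. Qed.

Definition Mw n k (w : {poly F}) : 'M[F]_(k, n) :=
  \matrix_(i, j) emb n k 'X^i ('X^i * w) 0 j.

Lemma Mw_pol n k w (y : 'rV[F]_k) : y *m Mw n k w = emb n k (pol y) (pol y * w).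
Proof.
apply/rowP => j; rewrite !mxE.
under eq_bigr do rewrite !mxE.
case: ifP => _.
  by rewrite coef_sum; apply: eq_bigr => i _; rewrite coefZ.
rewrite /pol mulr_suml coef_sum; apply: eq_bigr => i _.
by rewrite -scalerAl coefZ.
Qed.

Definition U n k w : {vspace 'rV[F]_n} := (linfun (mulmxr (Mw n k w)) @: fullv)%VS.

Lemma memU n k w x : x \in U n k w -> exists2 u : {poly F}, (size u <= k)%N & x = emb n k u (u * w).
Proof.
case/memv_imgP => y _ ->; rewrite lfunE /= Mw_pol.
by exists (pol y) => //; apply: size_pol.
Qed.

Lemma memU' n k w (u : {poly F}) : (size u <= k)%N -> emb n k u (u * w) \in U n k w.
Proof.
move=> su; apply/memv_imgP; exists (\row_(i < k) u`_i); first exact: memvf.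
by rewrite lfunE /= Mw_pol pol_row.
Qed.

Lemma size_mulw n k (u w : {poly F}) : (size w + k <= n - k + 1)%N -> (size u <= k)%N ->
  (size (u * w)%R <= n - k)%N.
Proof.
move=> sw su; apply: leq_trans (size_polyMleq _ _) _.
move: sw su; set a := size u; set b := size w; lia.
Qed.

Lemma dimU n k (w : {poly F}) : (k <= n)%N -> (size w + k <= n - k + 1)%N -> \dim (U n k w) = k.
Proof.
move=> kn sw; rewrite limg_dim_eq.
  by rewrite dimvf (dim_matrix 'F_2 1 k) mul1r.
have -> : lker (linfun (@mulmxr _ 1 k n (Mw n k w))) = 0%VS.
  apply/eqP; apply/lker0P => y y'; rewrite !lfunE /= !Mw_pol => /emb_inj [] //.
  - exact: size_pol.
  - exact: size_pol.
  - exact: size_mulw (size_pol _).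
  - exact: size_mulw (size_pol _).
  by move=> /pol_inj.
exact: capv0.
Qed.

Lemma F2_nz (c : F) : c != 0 -> c = 1.
Proof. by case: c => [[|[|//]]] //= i _; apply/val_inj. Qed.

Lemma key k (d1 d2 u0 u1 : {poly F}) : (0 < k)%N -> d1 != 0 -> d2 != 0 -> d1 != d2 ->
  d2 = u0 * d1 -> 'X^(k.-1) * d2 = u1 * d1 -> (size u1 <= k)%N -> False.
Proof.
move=> k0 nz1 nz2 ne e0 e1 s1.
have u0nz : u0 != 0 by apply: contraNneq nz2 => u00; rewrite e0 u00 mul0r.
have eu : u1 = u0 * 'X^(k.-1).
  apply: (mulIf nz1); rewrite -e1 e0 mulrA; congr (_ * _); exact: mulrC.
move: s1; rewrite eu size_mulXn // => s1.
have s0 : (size u0 <= 1)%N by move: s1 k0; set s := size u0; lia.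
move/size1_polyC: s0 => eu0.
have c1 : u0`_0 = 1.
  apply: F2_nz; apply: contraNneq u0nz => c0; by rewrite eu0 c0.
by move/eqP: ne; apply; rewrite e0 eu0 c1 mul1r.
Qed.

Definition good n k (w : {poly F}) := (size w + k <= n - k + 1)%N.

Lemma capU n k b c : (k <= n)%N -> good n k b -> good n k c -> b != c ->
  (U n k b :&: U n k c)%VS = 0%VS.
Proof.
move=> kn gb gc bc; apply/eqP; rewrite -subv0; apply/subvP => x /memv_capP [].
case/memU => ub sb -> /memU [uc sc] /emb_inj [] //; try exact: size_mulw.
move=> <- e; have : ub * (b - c) == 0 by rewrite mulrBr e subrr.
rewrite mulf_eq0 subr_eq0 (negbTE bc) orbF => /eqP ->.
by rewrite mul0r emb00 memv0.
Qed.

Lemma inU2 n k a b c j : (k <= n)%N -> good n k a -> good n k b -> good n k c -> (j < k)%N ->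
  emb n k 'X^j ('X^j * a) \in (U n k b + U n k c)%VS ->
  exists2 u : {poly F}, (size u <= k)%N & 'X^j * (a - b) = u * (c - b).
Proof.
move=> kn ga gb gc jk /memv_addP [x /memU [ub sb ->] [y /memU [uc sc ->]]].
rewrite embD => /emb_inj [] //.
- by rewrite size_polyXn.
- apply: leq_trans (size_polyD _ _) _; by rewrite geq_max sb sc.
- by apply: size_mulw; rewrite // size_polyXn.
- apply: leq_trans (size_polyD _ _) _; by rewrite geq_max !size_mulw.
move=> e1 e2; exists uc => //.
rewrite mulrBr e2 e1; ring.
Qed.

Lemma dim3 n k a b c : (0 < k)%N -> (k <= n)%N -> good n k a -> good n k b -> good n k c ->
  a != b -> b != c -> a != c ->
  (k + k.+1 <= \dim (U n k a + (U n k b + U n k c)))%N.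
Proof.
move=> k0 kn ga gb gc ab bc ac.
have dA := dimU kn ga; have dB := dimU kn gb; have dC := dimU kn gc.
have dBC : \dim (U n k b + U n k c) = (k + k)%N.
  by have := dimv_sum_cap (U n k b) (U n k c); rewrite capU // dimv0 addn0 dB dC.
have ns : ~~ (U n k a <= U n k b + U n k c)%VS.
  apply/negP => sub.
  have x0 : emb n k 'X^0 ('X^0 * a) \in (U n k b + U n k c)%VS.
    by apply: (subvP sub); apply: memU'; rewrite size_polyXn.
  have x1 : emb n k 'X^(k.-1) ('X^(k.-1) * a) \in (U n k b + U n k c)%VS.
    by apply: (subvP sub); apply: memU'; rewrite size_polyXn prednK.
  have [u0 _ e0] := @inU2 n k a b c 0 kn ga gb gc k0 x0.
  have [u1 s1 e1] := @inU2 n k a b c k.-1 kn ga gb gc (ltac:(by rewrite ltn_predL)) x1.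
  apply: (@key k (c - b) (a - b) u0 u1 k0 _ _ _ _ e1 s1).
  - by rewrite subr_eq0 eq_sym.
  - by rewrite subr_eq0.
  - by apply: contra ac => /eqP e; apply/eqP; apply: (addIr (- b)).
  by rewrite -e0 expr0 mul1r.
have lt : (\dim (U n k a :&: (U n k b + U n k c)) < k)%N.
  have [le eqq] := dimv_leqif_eq (capvSl (U n k a) (U n k b + U n k c)%VS).
  case E: (\dim (U n k a :&: (U n k b + U n k c)) == \dim (U n k a)).
    move: E; rewrite eqq => /eqP h; move/negP: ns; case; by apply/capv_idPl.
  by rewrite ltn_neqAle; move: le E; rewrite dA => -> ->.
have := dimv_sum_cap (U n k a) (U n k b + U n k c); rewrite dA dBC.
move: lt; set x := \dim _; set y := \dim _; lia.
Qed.

Lemma U_inj n k a b : (0 < k)%N -> (k <= n)%N -> good n k a -> good n k b ->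
  U n k a = U n k b -> a = b.
Proof.
move=> k0 kn ga gb E.
have : emb n k 1 (1 * a) \in U n k b by rewrite -E memU' // size_poly1.
case/memU => u su /emb_inj [] //.
- by rewrite size_poly1.
- by apply: size_mulw; rewrite // size_poly1.
- exact: size_mulw.
by move=> <-; rewrite !mul1r.
Qed.

Definition code n k : seq {vspace 'rV[F]_n} :=
  [seq U n k (Poly (tval t)) | t <- enum {: (n - 2 * k + 1)%N.-tuple F}].
Lemma good_tuple n k (t : (n - 2 * k + 1)%N.-tuple F) : (2 * k + 1 <= n)%N ->
  good n k (Poly t).
Proof.
move=> h; rewrite /good.
have h1 : (size (Poly t) <= n - 2 * k + 1)%N by have := size_Poly t; rewrite size_tuple.
move: (size (Poly t)) h1 => s h1; clear t; lia.
Qed.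

Lemma Poly_tuple_inj m (s t : m.-tuple F) : Poly s = Poly t -> s = t.
Proof.
move=> E; apply/val_inj/(@eq_from_nth _ 0); first by rewrite !size_tuple.
by move=> i _; have := congr1 (fun p : {poly F} => p`_i) E; rewrite /= !coef_Poly.
Qed.

Lemma mem_code n k X : X \in code n k -> exists t : (n - 2 * k + 1)%N.-tuple F, X = U n k (Poly t).
Proof. by case/mapP => t _ ->; exists t. Qed.

Close Scope ring_scope.
Theorem mainTheorem8 (n k : nat) :
  0 < n -> 2 <= k -> 2 * k + 1 <= n ->
  @B_ge 'F_2 n k k.+1 3 (2 ^ (n - 2 * k + 1)).
Proof.
move=> n0 k2 hn.
have k0 : (0 < k)%N by apply: leq_trans k2.
have kn : (k <= n)%N by lia.
have gt := fun t => @good_tuple n k t hn.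
exists (code n k); split; last first.
  by rewrite size_map -cardT card_tuple card_Fp.
split.
- rewrite map_inj_in_uniq ?enum_uniq // => s t _ _ E.
  by apply: Poly_tuple_inj; apply: (U_inj k0 kn (gt s) (gt t) E).
- by move=> X /mem_code [t ->]; apply: (dimU kn (gt t)).
move=> s us ss sub.
case: s us ss sub => [|A [|B [|C []]]] // us _ sub.
have [ta eA] := mem_code (sub A (mem_head _ _)).
have [tb eB] := mem_code (sub B ltac:(by rewrite !inE eqxx orbT)).
have [tc eC] := mem_code (sub C ltac:(by rewrite !inE eqxx !orbT)).
move: us; rewrite /= !inE !negb_or andbT => /andP [/andP [AB AC] BC].
rewrite !big_cons big_nil addv0 eA eB eC.
have nq : forall (X Y : (n - 2 * k + 1)%N.-tuple F), U n k (Poly X) != U n k (Poly Y) -> Poly X != Poly Y.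
  by move=> X Y; apply: contra => /eqP ->.
apply: dim3 => //; apply: nq; rewrite -?eA -?eB -?eC //.
Qed.
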